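(* Consider a $2\times N$ switch with traffic pattern consisting of one broadcast flow from input 1 to all $N$ outputs with rate $r_0$ and, for each $i\in[N]$, a unicast flow from input 2 to output $i$ with rate $r_i$. With fanout splitting but no coding, the achievable rate region is exactly the set of (rational) vectors $(r_0,r_1,\dots,r_N)$ satisfying $r_i\ge0$ for $i=0,\dots,N$; $\sum_{i=1}^N r_i\le1$; $r_0+r_i\le1$ for $i=1,\dots,N$; and $2r_0+\sum_{i=1}^N r_i\le 2$.
   Context: Slotted time. A configuration: each input idles or picks one of its flows and connects to a subset of that flow's fanout outputs, sending one packet to all connected outputs; each output connects to at most one input. Without coding, every transmitted packet is one original packet of the flow (fanout splitting means a broadcast packet may be delivered to different outputs in different slots); a packet is served once it has been delivered to all outputs in its fanout and is then removed from its queue. A frame is $F$ consecutive slots; a frame-based schedule is a fixed sequence of $F$ configurations repeated each frame. Here the achievable rate region is the set of rational rate vectors for which there is a frame-based schedule (without coding) with frame size $F$ such that each $r_iF$ is an integer and, for every flow and every frame $n\ge1$, the oldest $r F$ packets (with $r$ the flow's rate) in the flow's queue at the end of frame $n-1$ are served by the end of frame $n$ (all of them if there are fewer). *)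

(* Defs.v *)
From HB Require Import structures.
From mathcomp Require Import all_boot all_order all_algebra.
Set Implicit Arguments. Unset Strict Implicit. Unset Printing Implicit Defensive.
Import Order.TTheory GRing.Theory Num.Theory.

Section Switch.
Variables (m n : nat) (Fl : finType) (src : Fl -> 'I_m) (fan : Fl -> {set 'I_n}).

(* A configuration: each input idles (None) or picks one of its flows  *)
(* and a subset of that flow's fanout outputs.                         *)
Definition config := {ffun 'I_m -> option (Fl * {set 'I_n})}.

Definition idle_config : config := [ffun => None].

Definition valid_config (c : config) : Prop :=
  (forall i, match c i with
             | Some (f, X) => src f = i /\ X \subset fan f
             | None => True
             end) /\
  (forall i1 i2 f1 X1 f2 X2, i1 != i2 ->
     c i1 = Some (f1, X1) -> c i2 = Some (f2, X2) -> [disjoint X1 & X2]).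

Definition slot_config (sch : seq config) (t : nat) : config :=
  nth idle_config sch (t %% size sch).

(* Arrivals: [A f t] = number of packets of flow f that have arrived    *)
(* before slot t begins (A f 0 = initial backlog).  Packets of flow f   *)
(* are numbered 0,1,2,... in arrival order.                             *)
Definition arrivals := Fl -> nat -> nat.

Definition arrivals_monotone (A : arrivals) : Prop :=
  forall f t, A f t <= A f t.+1.

(* Packet selection: which original packet input i transmits in slot t *)
(* (None = nothing transmitted), as a function of the arrival process. *)
Definition policy := arrivals -> nat -> 'I_m -> option nat.

Definition causal (pol : policy) : Prop :=
  forall (A B : arrivals) t,
    (forall f s, s <= t -> A f s = B f s) -> forall i, pol A t i = pol B t i.

Section Run.
Variables (sch : seq config) (pol : policy) (A : arrivals).

Definition delivered (f : Fl) (k : nat) (j : 'I_n) (t : nat) : Prop :=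
  exists s X, s < t /\ slot_config sch s (src f) = Some (f, X) /\
              j \in X /\ pol A s (src f) = Some k.

Definition served (f : Fl) (k : nat) (t : nat) : Prop :=
  forall j, j \in fan f -> delivered f k j t.

Definition in_queue (f : Fl) (k : nat) (t : nat) : Prop :=
  k < A f t /\ ~ served f k t.

Definition valid_run : Prop :=
  forall t i f X k, slot_config sch t i = Some (f, X) ->
    pol A t i = Some k -> in_queue f k t.

Definition among_oldest (f : Fl) (c : nat) (k : nat) (T : nat) : Prop :=
  in_queue f k T /\
  forall s : seq nat, uniq s ->
    (forall k', k' \in s -> k' < k /\ in_queue f k' T) -> size s < c.

Definition frame_guarantee (c : Fl -> nat) : Prop :=
  forall nf, 0 < nf -> forall f k,
    among_oldest f (c f) k ((nf.-1) * size sch) -> served f k (nf * size sch).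

End Run.

Definition achievable (r : Fl -> rat) : Prop :=
  exists (sch : seq config) (c : Fl -> nat),
    [/\ 0 < size sch,
        (forall t, valid_config (slot_config sch t)),
        (forall f, (r f * (size sch)%:R = (c f)%:R)%R) &
        exists pol : policy, causal pol /\
          forall A : arrivals, arrivals_monotone A ->
            valid_run sch pol A /\ frame_guarantee sch pol A c].

End Switch.

(* The 2 x N switch: flow None = broadcast flow from input 1 (index 0)  *)
(* to all outputs; flow Some i = unicast from input 2 (index 1) to i.  *)
Definition src2N (N : nat) (f : option 'I_N) : 'I_2 :=
  if f is Some _ then ord_max else ord0.

Definition fan2N (N : nat) (f : option 'I_N) : {set 'I_N} :=
  if f is Some i then [set i] else setT.

Definition rates2N (N : nat) (r0 : rat) (r : 'I_N -> rat) (f : option 'I_N) : rat :=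
  if f is Some i then r i else r0.

(* Main.v *)
Require Import Defs.
From mathcomp Require Import all_boot all_order all_algebra.
From mathcomp Require Import zify ring.
Import Order.TTheory GRing.Theory Num.Theory.
Set Implicit Arguments. Unset Strict Implicit. Unset Printing Implicit Defensive.


Lemma step_mono (g : nat -> nat) : (forall k, g k <= g k.+1) ->
  forall m n, m <= n -> g m <= g n.
Proof.
move=> H m n /subnKC <-; elim: (n - m) => [|d IH]; first by rewrite addn0.
by rewrite addnS (leq_trans IH (H _)).
Qed.

Lemma interval_ex (g : nat -> nat) : (forall k, g k <= g k.+1) ->
  forall n t, g 0 <= t -> t < g n -> exists2 i, i < n & g i <= t < g i.+1.
Proof.
move=> H; elim=> [|n IH] t h0 hn; first by move: (leq_ltn_trans h0 hn); rewrite ltnn.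
case: (ltnP t (g n)) => ht.
  by case: (IH t h0 ht) => i hi hh; exists i => //; apply: ltnW.
by exists n => //; rewrite ht.
Qed.

Lemma sum_lt_min N i : \sum_(j < N) (j < i : nat) = minn i N.
Proof.
elim: N => [|N IH]; first by rewrite big_ord0; lia.
rewrite big_ord_recr /= IH; case: (ltnP N i) => h /=; lia.
Qed.

Lemma sum_count_below (g : nat -> nat) N i t : (forall k, g k <= g k.+1) ->
  i < N -> g i <= t < g i.+1 -> \sum_(j < N) (g j.+1 <= t : nat) = i.
Proof.
move=> H hi /andP[h1 h2].
rewrite -[RHS](_ : minn i N = i); last by lia.
rewrite -sum_lt_min; apply: eq_bigr => j _.
case: (ltnP j i) => hj.
  by rewrite (leq_trans (step_mono H hj) h1).
suff -> : (g j.+1 <= t) = false by [].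
apply/negbTE; rewrite -ltnNge; apply: (leq_trans h2); by apply: step_mono; last rewrite ltnS.
Qed.

Section Gen.
Variables (m n : nat) (Fl : finType) (src : Fl -> 'I_m) (fan : Fl -> {set 'I_n}).
Variables (sch : seq (config m n Fl)) (c : Fl -> nat) (role : Fl -> nat -> nat).
Let F := size sch.
Hypothesis F_gt0 : 0 < F.
Hypothesis Hvalid : forall t, valid_config src fan (slot_config sch t).
Hypothesis Hfan : forall f, exists j, j \in fan f.
Hypothesis P1 : forall f tt X, tt < F -> nth (idle_config m n Fl) sch tt (src f) = Some (f, X) ->
  role f tt < c f.
Hypothesis P2 : forall f p j, p < c f -> j \in fan f -> exists tt X, [/\ tt < F,
  nth (idle_config m n Fl) sch tt (src f) = Some (f, X), j \in X & role f tt = p].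
Hypothesis P3 : forall f tt X, tt < F -> nth (idle_config m n Fl) sch tt (src f) = Some (f, X) ->
  exists2 j, j \in fan f & forall tt' X', tt' < tt ->
   nth (idle_config m n Fl) sch tt' (src f) = Some (f, X') -> role f tt' = role f tt -> j \notin X'.

Fixpoint Sf (A : arrivals Fl) (f : Fl) (k : nat) : nat :=
  if k is k'.+1 then minn (Sf A f k' + c f) (A f (k' * F)) else 0.

Definition gpol : policy m Fl := fun A t i =>
  match slot_config sch t i with
  | Some (f, _) => let k := Sf A f (t %/ F) + role f (t %% F) in
                   if k < A f (t %/ F * F) then Some k else None
  | None => None
  end.

Lemma gpol_causal : causal gpol.
Proof.
move=> A B t hAB i; rewrite /gpol.
case: (slot_config sch t i) => [[f X]|] //.
have hS : forall k, k <= t %/ F -> Sf A f k = Sf B f k.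
  elim=> [|k IH] hk //=; rewrite IH ?(ltnW hk) // hAB //.
  apply: leq_trans (leq_trunc_div t F); apply: leq_mul => //; exact: ltnW.
rewrite hS // hAB //; exact: leq_trunc_div.
Qed.

Section Run.
Variable A : arrivals Fl.
Hypothesis Amono : arrivals_monotone A.

Lemma A_mono f s t : s <= t -> A f s <= A f t.
Proof. exact: (step_mono (Amono f)). Qed.

Lemma Sf_step f k : Sf A f k <= Sf A f k.+1.
Proof.
case: k => [|k] //=.
rewrite leq_min; apply/andP; split; first exact: leq_addr.
apply: leq_trans (geq_minr _ _) _.
apply: A_mono; rewrite leq_mul2r; by rewrite leqnSn orbT.
Qed.

Lemma Sf_mono f k l : k <= l -> Sf A f k <= Sf A f l.
Proof. exact: (step_mono (@Sf_step f)). Qed.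

Lemma slotE t : slot_config sch t = nth (idle_config m n Fl) sch (t %% F).
Proof. by []. Qed.

Lemma transm f s X k : slot_config sch s (src f) = Some (f, X) ->
  gpol A s (src f) = Some k ->
  [/\ k = Sf A f (s %/ F) + role f (s %% F), Sf A f (s %/ F) <= k & k < Sf A f (s %/ F).+1].
Proof.
move=> hc; rewrite /gpol hc /=.
case: ifP => // hk [<-]; split; [by [] | exact: leq_addr |].
rewrite /= leq_min hk andbT ltn_add2l; apply: P1 (ltn_pmod _ F_gt0) _.
exact: hc.
Qed.

Lemma deliv_lt f k j nn : delivered src sch gpol A f k j (nn * F) -> k < Sf A f nn.
Proof.
case=> s [X [hs [hc [hj hp]]]].
have [_ _ h] := transm hc hp.
apply: leq_trans h (Sf_mono _ _); by rewrite ltn_divLR.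
Qed.

Lemma lt_served f k nn : k < Sf A f nn -> served src fan sch gpol A f k (nn * F).
Proof.
move=> hk j hj.
have [i hi /andP[h1 h2]] := interval_ex (@Sf_step f) (leq0n k) hk.
have hp : k - Sf A f i < c f.
  have h2' : k < Sf A f i + c f := leq_trans h2 (geq_minl _ _).
  lia.
have [tt [X [htt hc hjX hr]]] := P2 hp hj.
exists (i * F + tt), X.
suff : [/\ i * F + tt < nn * F, slot_config sch (i * F + tt) (src f) = Some (f, X), j \in X &
   gpol A (i * F + tt) (src f) = Some k] by case.
have hdiv : (i * F + tt) %/ F = i by rewrite divnMDl // divn_small // addn0.
have hmod : (i * F + tt) %% F = tt by rewrite modnMDl modn_small.
split.
- apply: (@leq_trans (i.+1 * F)); first by rewrite mulSn; lia.
  by rewrite leq_mul2r hi orbT.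
- by change (nth (idle_config m n Fl) sch ((i * F + tt) %% F) (src f) = Some (f, X)); rewrite hmod.
- done.
- rewrite /gpol; change (nth (idle_config m n Fl) sch ((i * F + tt) %% F)) with (slot_config sch (i * F + tt)).
  rewrite /slot_config -/F hmod hc /= hdiv hr subnKC //.
  by rewrite (leq_trans h2 (geq_minr _ _)).
Qed.

Lemma run_valid : valid_run src fan sch gpol A.
Proof.
move=> t i f X k hc hp.
have hsrc : src f = i by have [H _] := Hvalid t; move: (H i); rewrite hc; case.
subst i.
have [hk h1 h2] := transm hc hp.
split.
  move: hp; rewrite /gpol hc; case: ifP => // hlt [<-].
  apply: leq_trans hlt (A_mono _ _); exact: leq_trunc_div.
have [j hj hno] := P3 (ltn_pmod t F_gt0) hc.
move=> /(_ j hj) [s [X' [hs [hc' [hjX hp']]]]].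
have [hk' h1' h2'] := transm hc' hp'.
have hq : s %/ F = t %/ F.
  apply/eqP; rewrite eqn_leq leq_div2r ?(ltnW hs) //=.
  rewrite leqNgt; apply/negP => hlt.
  have := leq_trans h2' (Sf_mono _ hlt); rewrite ltnNge h1; done.
have hr : role f (s %% F) = role f (t %% F).
  by apply/eqP; rewrite -(eqn_add2l (Sf A f (t %/ F))) -hk -hq -hk'.
have hm : s %% F < t %% F.
  move: hs; rewrite {1}(divn_eq s F) {1}(divn_eq t F) hq ltn_add2l; done.
by move: (hno _ _ hm hc' hr); rewrite hjX.
Qed.

Lemma guarantee : frame_guarantee src fan sch gpol A c.
Proof.
move=> nf hnf f k [[hkA hns] hold].
case: nf hnf hkA hns hold => // nn _ /= hkA hns hold.
have hge : Sf A f nn <= k by rewrite leqNgt; apply/negP => /lt_served.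
have hlt : k < Sf A f nn + c f.
  have := hold (iota (Sf A f nn) (k - Sf A f nn)) (iota_uniq _ _).
  rewrite size_iota; move=> H.
  have : k - Sf A f nn < c f.
    apply: H => k'; rewrite mem_iota => /andP[a b].
    have hk' : k' < k by lia.
    split => //; split; first exact: ltn_trans hkA.
    case: (Hfan f) => j hj /(_ j hj) /deliv_lt; rewrite ltnNge a; done.
  lia.
apply: lt_served; rewrite /= leq_min hlt; done.
Qed.

End Run.

Lemma gen_achievable : exists pol : policy m Fl, causal pol /\
  forall A : arrivals Fl, arrivals_monotone A ->
    valid_run src fan sch pol A /\ frame_guarantee src fan sch pol A c.
Proof.
exists gpol; split; first exact: gpol_causal.
move=> A hA; split; [exact: run_valid | exact: guarantee].
Qed.

End Gen.

Section Constr.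
Variables (n F c0 : nat) (cu : 'I_n.+1 -> nat).

Definition cc (j : nat) : nat := if j < n.+1 then cu (inord j) else 0.
Definition st (k : nat) : nat := \sum_(j < k) cc j.
Definition UU := st n.+1.
Definition ut (t : nat) : nat := \sum_(j < n.+1) (st j.+1 <= t : nat).
Definition ui (t : nat) : 'I_n.+1 := inord (ut t).
Definition aa := minn c0 (F - UU).
Definition bb := c0 - aa.

Lemma st_step k : st k.+1 = st k + cc k.
Proof. by rewrite /st big_ord_recr. Qed.

Lemma st_mono k : st k <= st k.+1.
Proof. by rewrite st_step leq_addr. Qed.

Lemma cc_ord (i : 'I_n.+1) : cc i = cu i.
Proof. by rewrite /cc ltn_ord inord_val. Qed.

Lemma UU_sum : UU = \sum_i cu i.
Proof. by rewrite /UU /st; apply: eq_bigr => i _; rewrite cc_ord. Qed.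

Lemma ut_spec t : t < UU -> [/\ ut t < n.+1, st (ut t) <= t & t < st (ut t) + cc (ut t)].
Proof.
move=> ht.
have h0 : st 0 <= t by rewrite /st big_ord0.
have [i hi hh] := interval_ex st_mono h0 ht.
rewrite /ut (sum_count_below st_mono hi hh) -st_step.
by case/andP: hh => -> ->.
Qed.

Lemma ut_eq i t : i < n.+1 -> st i <= t < st i.+1 -> ut t = i.
Proof. exact: sum_count_below st_mono. Qed.

Lemma val_ui t : t < UU -> val (ui t) = ut t.
Proof. by move=> /ut_spec [h _ _]; apply: inordK. Qed.

Hypothesis HU : UU <= F.
Hypothesis Hci : forall i, c0 + cu i <= F.
Hypothesis H2 : 2 * c0 + UU <= 2 * F.

Lemma cu_le_U i : cu i <= UU.
Proof. by rewrite UU_sum (bigD1 i) //= leq_addr. Qed.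

Lemma hb : 2 * bb <= UU.
Proof. rewrite /bb /aa; lia. Qed.

Lemma ha : UU + aa <= F.
Proof. rewrite /aa; lia. Qed.

Lemma hc0 : c0 = aa + bb.
Proof. rewrite /bb /aa; lia. Qed.

Lemma hcb i : cu i <= UU - bb.
Proof. have := Hci i; have := cu_le_U i; rewrite /bb /aa; lia. Qed.

Lemma ui_neq p : p < bb -> ui p != ui (p + (UU - bb)).
Proof.
move=> hp; have hb2 := hb.
have hp1 : p < UU by lia.
have hp2 : p + (UU - bb) < UU by lia.
apply/negP => /eqP /(congr1 val); rewrite !val_ui // => heq.
have [h1 h2 h3] := ut_spec hp1.
have [h1' h2' h3'] := ut_spec hp2.
rewrite -heq in h3'.
have := hcb (inord (ut p)); rewrite -cc_ord inordK //; lia.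
Qed.

Definition bcfg (tt : nat) : option (option 'I_n.+1 * {set 'I_n.+1}) :=
  if tt < bb then Some (None, setT :\ ui tt)
  else if (UU - bb <= tt) && (tt < UU) then Some (None, [set ui (tt - (UU - bb))])
  else if (UU <= tt) && (tt < UU + aa) then Some (None, setT) else None.

Definition ucfg (tt : nat) : option (option 'I_n.+1 * {set 'I_n.+1}) :=
  if tt < UU then Some (Some (ui tt), [set ui tt]) else None.

Definition cfg (tt : nat) : config 2 n.+1 (option 'I_n.+1) :=
  [ffun i => if i == ord0 then bcfg tt else ucfg tt].

Definition sch2 := mkseq cfg F.

Definition role2 (f : option 'I_n.+1) (tt : nat) : nat :=
  if f is Some i then tt - st i
  else if tt < bb then tt else if tt < UU then tt - (UU - bb) else bb + (tt - UU).

Definition cnt (f : option 'I_n.+1) : nat := if f is Some i then cu i else c0.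

Lemma I2_cases (i : 'I_2) : (i == ord0) || (i == ord_max).
Proof. by case: i => [[|[|k]] hk]. Qed.

Lemma cfg_valid tt : valid_config (@src2N n.+1) (@fan2N n.+1) (cfg tt).
Proof.
split.
  move=> i; rewrite ffunE.
  case: (orP (I2_cases i)) => /eqP ->; rewrite ?eqxx /=.
    rewrite /bcfg; case: ifP => _; first by split => //; exact: subsetT.
    case: ifP => _; first by split => //; exact: subsetT.
    by case: ifP => _ //; split => //; exact: subsetT.
  by rewrite /ucfg; case: ifP.
have key : forall f1 X1 f2 X2, bcfg tt = Some (f1, X1) -> ucfg tt = Some (f2, X2) ->
    [disjoint X1 & X2].
  move=> f1 X1 f2 X2 hb1; rewrite /ucfg; case: ifP => // hU [_ <-]; move: hb1.
  rewrite disjoint_sym disjoints1 /bcfg.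
  case: ifP => h1; first by case=> _ <-; rewrite setD11.
  case: ifP => h2; last by case: ifP => //; lia.
  case=> _ <-; rewrite in_set1.
  have hp : tt - (UU - bb) < bb by lia.
  have := ui_neq hp; rewrite subnK; last by lia.
  by rewrite eq_sym.
move=> i1 i2 f1 X1 f2 X2 hne; rewrite !ffunE.
case: (orP (I2_cases i1)) => /eqP e1; case: (orP (I2_cases i2)) => /eqP e2;
  subst i1 i2; rewrite ?eqxx //= => h1 h2.
- exact: key h1 h2.
- by rewrite disjoint_sym; exact: key h2 h1.
Qed.

Lemma nth_sch tt i : tt < F -> nth (idle_config 2 n.+1 _) sch2 tt i = cfg tt i.
Proof. by move=> h; rewrite /sch2 nth_mkseq. Qed.

Lemma cfg_None tt : cfg tt (@src2N n.+1 None) = bcfg tt.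
Proof. by rewrite ffunE. Qed.

Lemma cfg_Some tt (i : 'I_n.+1) : cfg tt (src2N (Some i)) = ucfg tt.
Proof. by rewrite ffunE. Qed.

Lemma ucfg_inv tt i X : ucfg tt = Some (Some i, X) ->
  [/\ tt < UU, X = [set i], st i <= tt & tt < st i + cu i].
Proof.
rewrite /ucfg; case: ifP => // h [hi <-]; rewrite -hi.
have := ut_spec h; rewrite -(val_ui h) cc_ord; case=> _ -> ->; done.
Qed.

Lemma P1c (f : option 'I_n.+1) tt X : tt < size sch2 -> nth (idle_config 2 n.+1 _) sch2 tt (src2N f) = Some (f, X) ->
  role2 f tt < cnt f.
Proof.
rewrite size_mkseq => htt; rewrite nth_sch //.
case: f => [i|].
  rewrite cfg_Some => /ucfg_inv [_ _ h1 h2] /=; lia.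
rewrite cfg_None /bcfg /= hc0; have hb2 := hb.
case: (ltnP tt bb) => h1 /=; first lia.
case: (ltnP tt UU) => h2 /=; first by rewrite andbT; case: ifP => // h3 _; lia.
rewrite andbF /=; case: ifP => // h3 _; lia.
Qed.

Lemma P2c (f : option 'I_n.+1) p j : p < cnt f -> j \in fan2N f -> exists tt X, [/\ tt < size sch2,
  nth (idle_config 2 n.+1 _) sch2 tt (src2N f) = Some (f, X), j \in X & role2 f tt = p].
Proof.
rewrite size_mkseq; have hb2 := hb; have ha2 := ha.
case: f => [i|] /= hp.
  rewrite in_set1 => /eqP ->.
  have hlt : st i + p < st i.+1 by rewrite st_step cc_ord ltn_add2l.
  have hU : st i.+1 <= UU by rewrite /UU; apply: (step_mono st_mono); exact: ltn_ord.
  have hu : ut (st i + p) = i by apply: ut_eq => //; rewrite leq_addr hlt.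
  exists (st i + p), [set i]; split.
  - lia.
  - have hUt : st i + p < UU by lia.
    rewrite nth_sch ?(cfg_Some _ i); last lia.
    by rewrite /ucfg hUt /ui hu inord_val.
  - by rewrite in_set1.
  - by rewrite /= addKn.
move=> _; rewrite hc0 in hp.
case: (ltnP p bb) => hpb.
  case: (eqVneq j (ui p)) => hj.
    exists (p + (UU - bb)), [set ui p]; split.
    - lia.
    - rewrite nth_sch ?cfg_None; last lia.
      rewrite /bcfg ifF; last lia. rewrite ifT; last lia.
      by rewrite addnK.
    - by rewrite hj in_set1.
    - rewrite /= ifF; last lia. rewrite ifT; last lia. lia.
  exists p, (setT :\ ui p); split.
  - lia.
  - by rewrite nth_sch ?cfg_None /bcfg ?hpb //; lia.
  - by rewrite in_setD1 hj in_setT.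
  - by rewrite /= hpb.
exists (UU + (p - bb)), setT; split.
- lia.
- rewrite nth_sch ?cfg_None; last lia.
  rewrite /bcfg ifF; last lia. rewrite ifF; last lia. rewrite ifT //; lia.
- by rewrite in_setT.
- rewrite /= ifF; last lia. rewrite ifF; last lia. lia.
Qed.

Lemma P3c (f : option 'I_n.+1) tt X : tt < size sch2 -> nth (idle_config 2 n.+1 _) sch2 tt (src2N f) = Some (f, X) ->
  exists2 j, j \in fan2N f & forall tt' X', tt' < tt ->
   nth (idle_config 2 n.+1 _) sch2 tt' (src2N f) = Some (f, X') -> role2 f tt' = role2 f tt -> j \notin X'.
Proof.
rewrite size_mkseq => htt; rewrite nth_sch //; have hb2 := hb.
case: f => [i|].
  rewrite cfg_Some => /ucfg_inv [_ _ h1 h2].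
  exists i; first by rewrite in_set1.
  move=> tt' X' hlt; rewrite nth_sch; last lia.
  rewrite cfg_Some => /ucfg_inv [_ _ h1' h2'] /=; lia.
rewrite cfg_None /bcfg.
case: ifP => h1.
  move=> _; exists ord0; first by rewrite in_setT.
  move=> tt' X' hlt; rewrite nth_sch; last lia.
  by rewrite cfg_None /= ifT ?h1; lia.
case: ifP => h2.
  move=> _; exists (ui (tt - (UU - bb))); first by rewrite in_setT.
  move=> tt' X' hlt; rewrite nth_sch; last lia.
  rewrite cfg_None /bcfg /= h1 (ifT _ _ (_ : tt < UU)); last lia.
  case: ifP => h1'.
    case=> <- ->; by rewrite setD11.
  case: ifP => h2'; first by move=> _; rewrite ifT; lia.
  case: ifP => h3' //; lia.
case: ifP => // /andP [h3 h4] _.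
have hU' : (tt < UU) = false by apply/negbTE; rewrite -leqNgt.
exists ord0; first by rewrite in_setT.
move=> tt' X' hlt; rewrite nth_sch; last lia.
rewrite cfg_None /bcfg /= h1 hU'.
case: ifP => h1'; first by move=> _ /= heq; exfalso; lia.
case: ifP => h2'.
  move=> _ /=; case: ifP => h5 heq; exfalso; lia.
case: ifP => // /andP [h6 h7] _ /=.
have hU'' : (tt' < UU) = false by apply/negbTE; rewrite -leqNgt.
rewrite hU'' => heq; exfalso; lia.
Qed.

Lemma constr_ach : 0 < F -> exists pol : policy 2 (option 'I_n.+1), causal pol /\
  forall A : arrivals _, arrivals_monotone A ->
    valid_run (@src2N n.+1) (@fan2N n.+1) sch2 pol A /\
    frame_guarantee (@src2N n.+1) (@fan2N n.+1) sch2 pol A cnt.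
Proof.
move=> hF.
apply: (@gen_achievable _ _ _ _ _ sch2 cnt role2).
- by rewrite size_mkseq.
- move=> t; rewrite /slot_config /sch2 size_mkseq nth_mkseq; [exact: cfg_valid | exact: ltn_pmod].
- case=> [i|] /=; first by exists i; rewrite in_set1.
  by exists ord0; rewrite in_setT.
- exact: P1c.
- exact: P2c.
- exact: P3c.
Qed.

End Constr.

Lemma sum_eqSome (o : option nat) C : \sum_(k < C) (o == Some (k : nat) : nat) <= 1.
Proof.
case: o => [k0|]; last by rewrite big1.
have -> : \sum_(k < C) (Some k0 == Some (k : nat) : nat) = (k0 < C).
  elim: C => [|C IH]; first by rewrite big_ord0.
  rewrite big_ord_recr /= IH (inj_eq (@Some_inj _)).
  case: (ltngtP k0 C) => h /=; lia.
by case: (k0 < C).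
Qed.

Lemma sum_ge1 (I : finType) (g : I -> bool) s : g s -> 1 <= \sum_i (g i : nat).
Proof. by move=> h; rewrite (bigD1 s) //= h. Qed.

Lemma sum_ge2 (I : finType) (g : I -> nat) s1 s2 : s1 != s2 -> g s1 + g s2 <= \sum_i g i.
Proof.
move=> hne; rewrite (bigD1 s1) //= (bigD1 s2) /=; last by rewrite eq_sym hne.
by rewrite addnA leq_addr.
Qed.

Lemma andb_le (a b : bool) : (a && b : nat) <= b.
Proof. by case: a. Qed.

Section Slot.
Variables (N : nat) (cf : config 2 N (option 'I_N)) (po : 'I_2 -> option nat).
Hypothesis Hv : valid_config (@src2N N) (@fan2N N) cf.

Definition fullc := if cf ord0 is Some (_, X) then X == setT else false.
Definition bJ (j : 'I_N) (k : nat) :=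
  (if cf ord0 is Some (_, X) then j \in X else false) && (po ord0 == Some k).
Definition uI (i : 'I_N) (k : nat) :=
  (if cf ord_max is Some (g, Y) then (g == Some i) && (i \in Y) else false) && (po ord_max == Some k).

Lemma disj f X g Y j : cf ord0 = Some (f, X) -> cf ord_max = Some (g, Y) -> j \in X -> j \in Y -> False.
Proof.
move=> h0 h1 hX hY; case: Hv => _ /(_ ord0 ord_max f X g Y isT h0 h1) /disjoint_setI0 hd.
have hj : j \in X :&: Y by rewrite inE hX hY.
by rewrite hd inE in hj.
Qed.

Lemma sum_uI_le (C : 'I_N -> nat) : \sum_(i < N) \sum_(k < C i) (uI i k : nat) <= 1.
Proof.
rewrite /uI; case: (cf ord_max) => [[g Y]|]; last by rewrite big1 // => i _; rewrite big1.
apply: (@leq_trans (\sum_(i < N) (g == Some i : nat))).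
  apply: leq_sum => i _; case: (eqVneq g (Some i)) => hg /=.
    apply: leq_trans (sum_eqSome (po ord_max) (C i)); apply: leq_sum => k _.
    by case: (i \in Y).
  by rewrite big1.
case: g => [i0|]; last by rewrite big1.
rewrite (bigD1 i0) //= eqxx big1 // => i hi /=.
by rewrite (inj_eq (@Some_inj _)) eq_sym (negbTE hi).
Qed.

Lemma sum_bJ_uI (C0 Cj : nat) j :
  \sum_(k < C0) (bJ j k : nat) + \sum_(k < Cj) (uI j k : nat) <= 1.
Proof.
rewrite /bJ /uI.
case h0: (cf ord0) => [[f X]|]; case h1: (cf ord_max) => [[g Y]|] /=.
- case hX: (j \in X).
    have hY : (j \in Y) = false by apply/negP => hY; exact: disj h0 h1 hX hY.
    rewrite hY andbF [X in _ + X]big1 // addn0.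
    exact: sum_eqSome.
  rewrite big1 //= add0n; apply: leq_trans (sum_eqSome (po ord_max) Cj); apply: leq_sum => k _.
  exact: andb_le.
- rewrite [X in _ + X]big1 // addn0; apply: leq_trans (sum_eqSome (po ord0) C0); apply: leq_sum => k _.
  exact: andb_le.
- rewrite big1 //= add0n; apply: leq_trans (sum_eqSome (po ord_max) Cj); apply: leq_sum => k _.
  exact: andb_le.
- by rewrite !big1.
Qed.

Lemma sum_slot3 (C0 : nat) (C : 'I_N -> nat) :
  \sum_(k < C0) ((po ord0 == Some (k : nat)) * (1 + fullc)) + \sum_(i < N) \sum_(k < C i) (uI i k : nat) <= 2.
Proof.
have hb := sum_eqSome (po ord0) C0.
rewrite -bigop.big_distrl /=.
case hf: fullc.
  have -> : \sum_(i < N) \sum_(k < C i) (uI i k : nat) = 0.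
    apply: big1 => i _; apply: big1 => k _; rewrite /uI.
    move: hf; rewrite /fullc; case h0: (cf ord0) => [[f X]|] // /eqP hX.
    case h1: (cf ord_max) => [[g Y]|] //=.
    case hY: (i \in Y); rewrite ?andbF //.
    by exfalso; apply: disj h0 h1 _ hY; rewrite hX in_setT.
  rewrite /=; set S := \sum_(k < C0) _ in hb *; lia.
have hu := sum_uI_le C; rewrite /=; set S := \sum_(k < C0) _ in hb *; set T := \sum_(i < N) _ in hu *; lia.
Qed.

End Slot.

Lemma sum_ones C : \sum_(k < C) 1 = C.
Proof. by rewrite sum_nat_const card_ord muln1. Qed.


Lemma sum_ge_term (I : finType) (g : I -> nat) s : g s <= \sum_i g i.
Proof. by rewrite (bigD1 s) //= leq_addr. Qed.

Section Nec.
Variables (N : nat) (hN : 0 < N) (sch : seq (config 2 N (option 'I_N)))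
  (c : option 'I_N -> nat) (pol : policy 2 (option 'I_N)).
Let F := size sch.
Hypothesis hF : 0 < F.
Hypothesis Hv : forall t, valid_config (@src2N N) (@fan2N N) (slot_config sch t).
Hypothesis Hfg : forall A, arrivals_monotone A -> frame_guarantee (@src2N N) (@fan2N N) sch pol A c.

Let A : arrivals (option 'I_N) := fun f _ => c f.
Let conf (s : 'I_F) := slot_config sch s.
Let po (s : 'I_F) := pol A s.

Lemma fan_ne (f : option 'I_N) : exists j, j \in fan2N f.
Proof.
case: f => [i|]; first by exists i; rewrite /= in_set1.
by exists (Ordinal hN); rewrite /= in_setT.
Qed.

Lemma served_all f k : k < c f -> served (@src2N N) (@fan2N N) sch pol A f k F.
Proof.
move=> hk; have hm : arrivals_monotone A by move=> f' t.
have := @Hfg A hm 1 isT f k.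
rewrite /= mul0n mul1n; apply; split.
  split; first exact: hk.
  case: (fan_ne f) => j hj /(_ j hj) [s [X [hs _]]]; by [].
move=> s hu hs; apply: leq_ltn_trans hk.
rewrite -(size_iota 0 k); apply: uniq_leq_size => // x /hs [hx _].
by rewrite mem_iota.
Qed.

Lemma deliv f k j : k < c f -> j \in fan2N f -> exists s : 'I_F, exists X,
  [/\ conf s (src2N f) = Some (f, X), j \in X & po s (src2N f) = Some k].
Proof.
move=> hk hj; have [s [X [hs [h1 [h2 h3]]]]] := served_all hk hj.
by exists (Ordinal hs), X.
Qed.

Lemma count1 : \sum_(i < N) c (Some i) <= F.
Proof.
apply: (@leq_trans (\sum_(i < N) \sum_(k < c (Some i)) \sum_(s < F) (uI (conf s) (po s) i k : nat))).
  apply: leq_sum => i _; apply: (@leq_trans (\sum_(k < c (Some i)) 1)); first by rewrite sum_ones.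
  apply: leq_sum => k _.
  have hi : i \in fan2N (Some i) by rewrite /= in_set1.
  have [s [X [h1 h2 h3]]] := deliv (ltn_ord k) hi.
  apply: (sum_ge1 (s := s)); rewrite /uI /= h1 h2 h3 !eqxx; done.
rewrite (eq_bigr (fun i => \sum_(s < F) \sum_(k < c (Some i)) (uI (conf s) (po s) i k : nat)));
  last by move=> i _; rewrite exchange_big.
rewrite exchange_big /= -[F in _ <= F]sum_ones; apply: leq_sum => s _.
apply: sum_uI_le; exact: Hv.
Qed.

Lemma count2 i : c None + c (Some i) <= F.
Proof.
apply: (@leq_trans (\sum_(k < c None) \sum_(s < F) (bJ (conf s) (po s) i k : nat)
   + \sum_(k < c (Some i)) \sum_(s < F) (uI (conf s) (po s) i k : nat))).
  apply: leq_add.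
    apply: (@leq_trans (\sum_(k < c None) 1)); first by rewrite sum_ones.
    apply: leq_sum => k _.
    have hi : i \in @fan2N N None by rewrite /= in_setT.
  have [s [X [h1 h2 h3]]] := deliv (ltn_ord k) hi.
    apply: (sum_ge1 (s := s)); rewrite /bJ /= h1 h2 h3 !eqxx; done.
  apply: (@leq_trans (\sum_(k < c (Some i)) 1)); first by rewrite sum_ones.
  apply: leq_sum => k _.
  have hi : i \in fan2N (Some i) by rewrite /= in_set1.
  have [s [X [h1 h2 h3]]] := deliv (ltn_ord k) hi.
  apply: (sum_ge1 (s := s)); rewrite /uI /= h1 h2 h3 !eqxx; done.
have e1 : \sum_(k < c None) \sum_(s < F) (bJ (conf s) (po s) i k : nat) =
  \sum_(s < F) \sum_(k < c None) (bJ (conf s) (po s) i k : nat) by exact: exchange_big.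
have e2 : \sum_(k < c (Some i)) \sum_(s < F) (uI (conf s) (po s) i k : nat) =
  \sum_(s < F) \sum_(k < c (Some i)) (uI (conf s) (po s) i k : nat) by exact: exchange_big.
rewrite e1 e2 -big_split /=.
apply: (@leq_trans (\sum_(s < F) 1)); last by rewrite sum_ones.
apply: leq_sum => s _; apply: sum_bJ_uI; exact: Hv.
Qed.

Lemma count3 : 2 * c None + \sum_(i < N) c (Some i) <= 2 * F.
Proof.
apply: (@leq_trans (\sum_(k < c None) \sum_(s < F) ((po s ord0 == Some (k : nat)) * (1 + fullc (conf s)))
   + \sum_(i < N) \sum_(k < c (Some i)) \sum_(s < F) (uI (conf s) (po s) i k : nat))).
  apply: leq_add.
    apply: (@leq_trans (\sum_(k < c None) 2)); first by rewrite sum_nat_const card_ord mulnC.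
    apply: leq_sum => k _.
    have [j0 hj0] := fan_ne (@None 'I_N).
    have [s1 [X1 [h1 h2 h3]]] := deliv (ltn_ord k) hj0.
    rewrite /= in h1 h3.
    have hpo : forall s, po s ord0 = Some (k : nat) -> 1 <= (po s ord0 == Some (k : nat)) * (1 + fullc (conf s)).
      by move=> s ->; rewrite eqxx mul1n leq_addr.
    case: (eqVneq X1 setT) => hX.
      apply: leq_trans (sum_ge_term _ s1).
      by rewrite /fullc h1 hX h3 !eqxx.
    have [j' hj'] : exists j', j' \notin X1.
      case: (pickP (fun j => j \notin X1)) => [j' hj'|hall]; first by exists j'.
      by exfalso; move/eqP: hX; apply; apply/setP => j; rewrite in_setT; move: (hall j) => /= /negbFE.
    have hj2 : j' \in @fan2N N None by rewrite /= in_setT.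
    have [s2 [X2 [h1' h2' h3']]] := deliv (ltn_ord k) hj2.
    rewrite /= in h1' h3'.
    have hne : s1 != s2.
      apply/negP => /eqP hs; subst s2; move: h1'; rewrite h1 => -[hh]; subst X2.
      by move: hj'; rewrite h2'.
    apply: leq_trans (sum_ge2 _ hne).
    by have := hpo _ h3; have := hpo _ h3'; lia.
  apply: leq_sum => i _; apply: (@leq_trans (\sum_(k < c (Some i)) 1)); first by rewrite sum_ones.
  apply: leq_sum => k _.
  have hi : i \in fan2N (Some i) by rewrite /= in_set1.
  have [s [X [h1 h2 h3]]] := deliv (ltn_ord k) hi.
  apply: (sum_ge1 (s := s)); rewrite /uI /= h1 h2 h3 !eqxx; done.
rewrite (eq_bigr (fun i => \sum_(s < F) \sum_(k < c (Some i)) (uI (conf s) (po s) i k : nat)));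
  last by move=> i _; rewrite exchange_big.
rewrite exchange_big [X in _ + X <= _]exchange_big /= -big_split /=.
rewrite -[F in _ <= 2 * F]sum_ones big_distrr /=; apply: leq_sum => s _; rewrite muln1.
apply: sum_slot3; exact: Hv.
Qed.

End Nec.
Unset Implicit Arguments.
Local Open Scope ring_scope.

Lemma ratle (x : rat) (F a b : nat) : (0 < F)%N -> x * F%:R = a%:R -> (a <= b * F)%N -> x <= b%:R.
Proof.
move=> hF h hab; rewrite -(ler_pM2r (_ : 0 < F%:R)) ?ltr0n // h -natrM ler_nat //.
Qed.

Lemma natle (x : rat) (F a b : nat) : (0 < F)%N -> x * F%:R = a%:R -> x <= b%:R -> (a <= b * F)%N.
Proof.
move=> hF h hx; rewrite -(ler_nat rat) natrM -h ler_pM2r ?ltr0n //.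
Qed.

Lemma ratge0 (x : rat) (F a : nat) : (0 < F)%N -> x * F%:R = a%:R -> 0 <= x.
Proof. by move=> hF h; rewrite -(pmulr_lge0 _ (_ : 0 < F%:R)) ?ltr0n // h ler0n. Qed.

Theorem theorem8 (N : nat) (r0 : rat) (r : 'I_N -> rat) :
  (0 < N)%N ->
  (achievable (@src2N N) (@fan2N N) (rates2N r0 r) <->
   [/\ 0 <= r0, (forall i, 0 <= r i), \sum_(i < N) r i <= 1,
       (forall i, r0 + r i <= 1) & 2 * r0 + \sum_(i < N) r i <= 2]).
Proof.
move=> hN; split.
  case=> sch [c [hF hv hrate [pol [hcaus H]]]].
  have Hfg : forall A, arrivals_monotone A ->
      frame_guarantee (@src2N N) (@fan2N N) sch pol A c by move=> A hA; case: (H A hA).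
  have c1 := count1 hN Hfg.
  have c2 := count2 hN hv Hfg.
  have c3 := count3 hN hF hv Hfg.
  have hsum : (\sum_(i < N) r i) * (size sch)%:R = (\sum_(i < N) c (Some i))%:R.
    by rewrite mulr_suml natr_sum; apply: eq_bigr => i _; exact: (hrate (Some i)).
  split.
  - exact: (@ratge0 r0 _ _ hF (hrate None)).
  - by move=> i; exact: (@ratge0 (r i) _ _ hF (hrate (Some i))).
  - apply: (@ratle _ _ _ 1 hF hsum); by rewrite mul1n.
  - move=> i; apply: (@ratle _ _ (c None + c (Some i))%N 1 hF).
      by rewrite mulrDl natrD (hrate None) (hrate (Some i)).
    by rewrite mul1n.
  - apply: (@ratle _ _ (2 * c None + \sum_(i < N) c (Some i))%N 2 hF) => //.
    by rewrite mulrDl -mulrA (hrate None) hsum natrD natrM.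
case=> h0 hr hs hi h2.
case: N hN r hr hs hi h2 => // n _ r hr hs hi h2.
pose q := rates2N r0 r.
have hq : forall f, 0 <= q f by case=> [i|] //=.
pose D := (\prod_(f : option 'I_n.+1) `|denq (q f)|)%N.
have Dpos : (0 < D)%N by apply: prodn_gt0 => f; rewrite absz_gt0 denq_neq0.
pose c f := (`|numq (q f)| * (D %/ `|denq (q f)|))%N.
have hrate : forall f, q f * D%:R = (c f)%:R.
  move=> f.
  have hd : (`|denq (q f)| %| D)%N by rewrite /D (bigD1 f) //= dvdn_mulr.
  have hn : (`|numq (q f)|%N)%:R = (numq (q f))%:~R :> rat by rewrite -[LHS]/((`|numq (q f)|%N)%:Z%:~R) gez0_abs // numq_ge0.
  have hdn : (`|denq (q f)|%N)%:R = (denq (q f))%:~R :> rat by rewrite -[LHS]/((`|denq (q f)|%N)%:Z%:~R) gez0_abs // ltW // denq_gt0.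
  have hd0 : (denq (q f))%:~R != 0 :> rat by rewrite intr_eq0 denq_neq0.
  rewrite /c -{1}(divnK hd) !natrM hn hdn -{1}(divq_num_den (q f)).
  by field.
have c1 : (\sum_(i < n.+1) c (Some i) <= 1 * D)%N.
  apply: (@natle (\sum_(i < n.+1) r i) _ _ _ Dpos) => //.
  by rewrite mulr_suml natr_sum; apply: eq_bigr => i _; exact: (hrate (Some i)).
have c2 : forall i, (c None + c (Some i) <= 1 * D)%N.
  move=> i; apply: (@natle (r0 + r i) _ _ _ Dpos) => //.
  by rewrite mulrDl natrD (hrate None) (hrate (Some i)).
have c3 : (2 * c None + \sum_(i < n.+1) c (Some i) <= 2 * D)%N.
  apply: (@natle (2 * r0 + \sum_(i < n.+1) r i) _ _ _ Dpos) => //.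
  rewrite mulrDl -mulrA (hrate None) natrD natrM mulr_suml natr_sum; congr (_ + _).
  by apply: eq_bigr => i _; exact: (hrate (Some i)).
pose cu i := c (Some i).
have HU : (UU cu <= D)%N by rewrite UU_sum; move: c1; rewrite mul1n.
have Hci : forall i, (c None + cu i <= D)%N by move=> i; move: (c2 i); rewrite mul1n.
have H2 : (2 * c None + UU cu <= 2 * D)%N by rewrite UU_sum.
have [pol [hcaus H]] := constr_ach HU Hci H2 Dpos.
exists (sch2 D (c None) cu), (cnt (c None) cu); split.
- by rewrite size_mkseq.
- move=> t; rewrite /slot_config /sch2 size_mkseq nth_mkseq; [exact: cfg_valid | exact: ltn_pmod].
- by rewrite size_mkseq; case=> [i|] /=; [exact: (hrate (Some i)) | exact: (hrate None)].
- by exists pol.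
Qed.
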